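(* Fix $p\le 5$ and a relative order $R$ of length $p$. Let $n_1,\dots,n_h$ and $n'_1,\dots,n'_h$ be nonnegative integers with $n'_a\le n_a$ for all $a$, $\sum_a(n_a-n'_a)\le 5$, and $n'=\sum_a n'_a\ge p$ (the $n'_a$ may be $0$); let $n=\sum_a n_a$. Let $P_1$ be the probability that $(\pi(1),\dots,\pi(p))$ has relative order $R$ when $\pi$ is a uniformly distributed permutation of $\{1^{n_1},\dots,h^{n_h}\}$, and $P_2$ the same probability when $\pi$ is a uniformly distributed permutation of $\{1^{n'_1},\dots,h^{n'_h}\}$. Then $|P_1-P_2|\le C/n$ for an absolute constant $C$ (independent of $h$, $n$, the $n_a$, the $n'_a$, and $R$).
   Context: A permutation of the multiset $\{1^{m_1},\dots,h^{m_h}\}$ is a sequence $(\pi(1),\dots,\pi(m))$, $m=\sum m_a$, in which each $a$ occurs exactly $m_a$ times; uniformly distributed means all such sequences are equally likely. The relative order of a sequence $s_1,\dots,s_p$ is the ordered partition of $\{1,\dots,p\}$ obtained by putting $q$ and $r$ in the same block iff $s_q=s_r$, with blocks ordered by increasing common value of $s_q$. *)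

(* Defs.v *)
From mathcomp Require Import all_boot all_order all_algebra.
Set Implicit Arguments. Unset Strict Implicit. Unset Printing Implicit Defensive.
Import Order.TTheory GRing.Theory Num.Theory.

(* Positions are 0-based: position q : 'I_p stands for q+1 in {1,...,p};
   letters a : 'I_h stand for a+1 in {1,...,h}. *)

(* Relative order of the first p entries of a sequence s (of letters, as
   nats): the ordered partition of the positions {0,...,p-1}, q and r in the
   same block iff s_q = s_r, blocks ordered by increasing common value. *)
Definition relorder (p : nat) (s : seq nat) : seq {set 'I_p} :=
  [seq [set q : 'I_p | nth 0 s q == v] | v <- sort leq (undup (take p s))].

(* R is an ordered partition of {0,...,p-1}: nonempty blocks, pairwise
   disjoint (total size p), covering everything. *)
Definition ordered_partition (p : nat) (R : seq {set 'I_p}) : bool :=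
  [&& set0 \notin R,
      \sum_(B <- R) #|B| == p &
      \bigcup_(B <- R) B == [set: 'I_p]].

Definition mperms (h : nat) (m : 'I_h -> nat) :
  {set (\sum_(a < h) m a).-tuple 'I_h} :=
  [set t : (\sum_(a < h) m a).-tuple 'I_h | [forall a : 'I_h, count_mem a (tval t) == m a]].

Definition prob_relorder (h : nat) (m : 'I_h -> nat) (p : nat)
    (R : seq {set 'I_p}) : rat :=
  (#|[set t in mperms m | relorder p (map val t) == R]|%:R
     / #|mperms m|%:R)%R.

(* Main.v *)
Require Import Defs.
From mathcomp Require Import all_boot all_order all_algebra.
From mathcomp Require Import zify ring lra.
From Stdlib Require Import FunctionalExtensionality.
Import Order.TTheory GRing.Theory Num.Theory.
Set Implicit Arguments. Unset Strict Implicit. Unset Printing Implicit Defensive.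

Section Seqs.
Variable T : eqType.
Implicit Types (s : seq T) (a b : T).

Definition ins i a s := take i s ++ a :: drop i s.
Definition del i s := take i s ++ drop i.+1 s.

Lemma size_ins i a s : size (ins i a s) = (size s).+1.
Proof. rewrite /ins size_cat /= size_take size_drop; case: ltnP => H; lia. Qed.

Lemma size_del i s : i < size s -> size (del i s) = (size s).-1.
Proof. move=> H; rewrite /del size_cat size_take size_drop H; lia. Qed.

Lemma del_ins i a s : i <= size s -> del i (ins i a s) = s.
Proof.
move=> H; have Hs : size (take i s) = i by rewrite size_takel.
rewrite /del /ins take_size_cat // drop_cat Hs ltnNge leqnSn /= subSnn /=.
by rewrite drop0 cat_take_drop.
Qed.

Lemma ins_del x0 i s : i < size s -> ins i (nth x0 s i) (del i s) = s.
Proof.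
move=> H; have Hs : size (take i s) = i by rewrite size_takel // ltnW.
rewrite /del /ins take_size_cat // drop_cat Hs ltnn subnn drop0.
by rewrite -(drop_nth x0 H) cat_take_drop.
Qed.

Lemma count_ins i a b s : count_mem b (ins i a s) = count_mem b s + (a == b).
Proof.
rewrite /ins count_cat /= -[in RHS](cat_take_drop i s) count_cat; lia.
Qed.

Lemma nth_ins x0 i a s : i <= size s -> nth x0 (ins i a s) i = a.
Proof.
move=> H; have Hs : size (take i s) = i by rewrite size_takel.
by rewrite /ins nth_cat Hs ltnn subnn.
Qed.

Lemma take_ins p i a s : p <= i -> i <= size s -> take p (ins i a s) = take p s.
Proof.
move=> Hp H; have Hs : size (take i s) = i by rewrite size_takel.
rewrite /ins take_cat Hs; case: ltnP => Hpi.
  by rewrite take_takel.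
have -> : p = i by lia.
by rewrite subnn take0 cats0.
Qed.
End Seqs.
Section Tup.
Variable h : nat.
Implicit Types (m : 'I_h -> nat) (a b : 'I_h).

Definition okm m (s : seq 'I_h) := [forall b, count_mem b s == m b].

Lemma tins_proof n i a (t : n.-tuple 'I_h) : size (ins i a t) == n.+1.
Proof. by rewrite size_ins size_tuple. Qed.
Definition tins n i a (t : n.-tuple 'I_h) : n.+1.-tuple 'I_h := Tuple (tins_proof i a t).

Lemma tdel_proof n (i : 'I_n.+1) (t : n.+1.-tuple 'I_h) : size (del i t) == n.
Proof. by rewrite size_del size_tuple. Qed.
Definition tdel n (i : 'I_n.+1) (t : n.+1.-tuple 'I_h) : n.-tuple 'I_h := Tuple (tdel_proof i t).

Lemma tins_inj n (i : 'I_n.+1) a : injective (@tins n i a).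
Proof.
move=> t1 t2 /(congr1 (fun t : n.+1.-tuple 'I_h => del i (tval t))) /=.
have Hi : (i <= n)%N by rewrite -ltnS ltn_ord.
by rewrite !del_ins ?size_tuple //; exact: val_inj.
Qed.

Variables (m' : 'I_h -> nat) (a : 'I_h) (G : pred (seq 'I_h)).
Let m := fun b => m' b + (b == a).

Lemma okm_ins i s : okm m (ins i a s) = okm m' s.
Proof.
have E b : (count_mem b (ins i a s) == m b) = (count_mem b s == m' b).
  by rewrite count_ins /m [a == b]eq_sym eqn_add2r.
by apply/forallP/forallP => H b; move: (H b); rewrite E.
Qed.

Lemma card_slice n (i : 'I_n.+1) :
  #|[set t : n.+1.-tuple 'I_h | okm m t && (tnth t i == a) && G t]|
  = #|[set t : n.-tuple 'I_h | okm m' t && G (tins i a t)]|.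
Proof.
rewrite -(card_imset _ (@tins_inj n i a)); apply: eq_card => t.
rewrite inE; apply/idP/imsetP.
  case/andP => /andP[okt /eqP ti] Gt.
  have Ht : tins i a (tdel i t) = t.
    apply: val_inj => /=; rewrite -{1}ti (tnth_nth a) ins_del //.
    by rewrite size_tuple.
  exists (tdel i t) => //.
  rewrite inE -(okm_ins i); move: okt Gt; rewrite -{1 2}Ht => okt Gt.
  by apply/andP; split; [exact: okt | exact: Gt].
case=> t'; rewrite inE => /andP[okt Gt] ->.
rewrite /= okm_ins okt Gt andbT /= (tnth_nth a) /= nth_ins //.
by rewrite size_tuple -ltnS ltn_ord.
Qed.

Lemma count_tuple n (t : n.-tuple 'I_h) :
  count_mem a t = \sum_(i < n) (if tnth t i == a then 1 else 0).
Proof. by rewrite -sum1_count big_tuple big_mkcond. Qed.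

Lemma sum_slices n :
  \sum_(i < n.+1) #|[set t : n.+1.-tuple 'I_h | okm m t && (tnth t i == a) && G t]|
  = m a * #|[set t : n.+1.-tuple 'I_h | okm m t && G t]|.
Proof.
under eq_bigr do rewrite -sum1_card big_mkcond /=.
rewrite exchange_big /= mulnC -sum_nat_const [RHS]big_mkcond /=.
apply: eq_bigr => t _; rewrite inE.
under eq_bigr do rewrite inE.
case okt: (okm m t); case: (G t) => /=;
  [| by rewrite big1 // => i; rewrite andbF | by rewrite big1 | by rewrite big1].
under eq_bigr do rewrite andbT.
by rewrite -count_tuple; move/forallP: okt => /(_ a)/eqP.
Qed.

End Tup.

Lemma sum_ltn k p : \sum_(i < k) ((i < p)%N : nat) = minn k p.
Proof.
elim: k => [|k IH]; first by rewrite big_ord0 min0n.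
rewrite big_ord_recr /= IH; case: ltnP => H; lia.
Qed.

Section Step.
Variable h : nat.
Variables (m' : 'I_h -> nat) (a : 'I_h) (G : pred (seq 'I_h)) (p : nat).
Hypothesis HG : forall s, G s = G (take p s).
Let m := fun b => m' b + (b == a).

Lemma step_nat n :
  let S := m a * #|[set t : n.+1.-tuple 'I_h | okm m t && G t]| in
  let N' := #|[set t : n.-tuple 'I_h | okm m' t && G t]| in
  let M' := #|[set t : n.-tuple 'I_h | okm m' t]| in
  (S <= n.+1 * N' + p * M') /\ (n.+1 * N' <= S + p * M').
Proof.
move=> S N' M'.
pose c (i : 'I_n.+1) := #|[set t : n.-tuple 'I_h | okm m' t && G (tins i a t)]|.
have ES : S = \sum_i c i.
  rewrite /S -(sum_slices m' a G n); apply: eq_bigr => i _.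
  exact: card_slice.
have cM i : c i <= M'.
  apply: subset_leq_card; apply/subsetP => t; rewrite !inE.
  by case/andP.
have cN (i : 'I_n.+1) : (p <= i)%N -> c i = N'.
  move=> Hp; apply: eq_card => x; rewrite !inE.
  have Hi : (i <= n)%N by rewrite -ltnS ltn_ord.
  by rewrite HG [in RHS]HG /= take_ins // size_tuple.
have NM : N' <= M'.
  apply: subset_leq_card; apply/subsetP => t; rewrite !inE.
  by case/andP.
have Hsum : \sum_(i < n.+1) ((i < p)%N : nat) * M' <= p * M'.
  by rewrite -big_distrl /= sum_ltn leq_mul2r geq_minr orbT.
split.
  rewrite ES; apply: (@leq_trans (\sum_(i < n.+1) (N' + ((i < p)%N : nat) * M'))).
    apply: leq_sum => i _; case: (ltnP i p) => H.
      by rewrite mul1n; apply: leq_trans (cM i) (leq_addl _ _).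
    by rewrite (cN i H) leq_addr.
  by rewrite big_split /= sum_nat_const card_ord leq_add2l.
rewrite ES; apply: (@leq_trans (\sum_(i < n.+1) (c i + ((i < p)%N : nat) * M'))).
  have -> : n.+1 * N' = \sum_(i < n.+1) N' by rewrite sum_nat_const card_ord.
  apply: leq_sum => i _; case: (ltnP i p) => H.
    by rewrite mul1n; apply: leq_trans NM (leq_addl _ _).
  by rewrite (cN i H) leq_addr.
by rewrite big_split /= leq_add2l.
Qed.
End Step.

Local Open Scope ring_scope.
Lemma rat_bound (k N M N' M' n1 p : rat) : 0 < k -> 0 < n1 -> 0 <= M' ->
  k * M = n1 * M' -> `|k * N - n1 * N'| <= p * M' -> 0 <= p ->
  `|N / M - N' / M'| <= p / n1.
Proof.
move=> k0 n0 M0 EM HN p0.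
have pn : 0 <= p / n1 by rewrite divr_ge0 // ltW.
have [M'z|M'0] := eqVneq M' 0.
  rewrite M'z; have -> : M = 0.
    by apply/eqP; move: EM; rewrite M'z mulr0 => /eqP; rewrite mulf_eq0 gt_eqF.
  by rewrite !invr0 !mulr0 subrr normr0.
have Mpos : 0 < M' by rewrite lt_def M'0.
have Mne : M != 0.
  apply/eqP => M00; move: EM; rewrite M00 mulr0 => /esym/eqP.
  by rewrite mulf_eq0 (negbTE M'0) gt_eqF.
have kne : k != 0 by rewrite gt_eqF.
have nne : n1 != 0 by rewrite gt_eqF.
have -> : N / M - N' / M' = (k * N - n1 * N') / (n1 * M').
  have -> : M = n1 * M' / k by rewrite -EM; field.
  by field; rewrite M'0 kne nne.
have dpos : 0 < n1 * M' by rewrite mulr_gt0.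
rewrite normrM normfV (gtr0_norm dpos) ler_pdivrMr //.
apply: (le_trans HN); rewrite mulrA divfK //.
Qed.

Definition Gr p (R : seq {set 'I_p}) h (s : seq 'I_h) : bool :=
  relorder p (map val s) == R.
Arguments Gr p R {h} s.

Lemma Gr_take p R h (s : seq 'I_h) : Gr p R s = Gr p R (take p s).
Proof.
rewrite /Gr /relorder map_take take_takel //; congr (_ == _).
apply: eq_map => v; apply/setP => q; rewrite !inE nth_take //.
Qed.

Lemma probE h (m : 'I_h -> nat) p R n : (\sum_(a < h) m a)%N = n ->
  @prob_relorder h m p R =
  #|[set t : n.-tuple 'I_h | okm m t && Gr p R t]|%:R
    / #|[set t : n.-tuple 'I_h | okm m t]|%:R.
Proof.
move=> <-; rewrite /prob_relorder /mperms.
congr (_%:R / _%:R); apply: eq_card => t; rewrite !inE //.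
Qed.

Lemma nat_abs (x y z : nat) : (x <= y + z)%N -> (y <= x + z)%N ->
  `|x%:R - y%:R| <= z%:R :> rat.
Proof.
move=> H1 H2.
have H1' : (x%:R <= y%:R + z%:R :> rat) by rewrite -natrD ler_nat.
have H2' : (y%:R <= x%:R + z%:R :> rat) by rewrite -natrD ler_nat.
rewrite ler_norml; apply/andP; split; lra.
Qed.

Lemma step_rat h (m' : 'I_h -> nat) a p R :
  `|@prob_relorder h (fun b => m' b + (b == a))%N p R - @prob_relorder h m' p R|
    <= p%:R / ((\sum_b m' b).+1)%:R.
Proof.
set n := (\sum_b m' b)%N.
have Hs : (\sum_b (m' b + (b == a)) = n.+1)%N.
  rewrite big_split /= -/n -addn1; congr (_ + _)%N.
  rewrite (bigD1 a) //= eqxx big1 // => b /negbTE ->; done.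
rewrite (@probE h _ p R _ Hs) (@probE h m' p R n (erefl n)).
have [h1 h2] := @step_nat h m' a (Gr p R) p (@Gr_take p R h) n.
have [h3 h4] := @step_nat h m' a predT 0 (fun _ => erefl) n.
have E k (mm : 'I_h -> nat) :
   #|[set t : k.-tuple 'I_h | okm mm t && predT t]| = #|[set t : k.-tuple 'I_h | okm mm t]|.
  by apply: eq_card => t; rewrite !inE andbT.
rewrite !E !mul0n !addn0 in h3 h4.
rewrite /= eqxx in h1 h2 h3 h4.
apply: (@rat_bound (m' a + (a == a))%:R); rewrite ?ltr0n ?ler0n //.
- by rewrite eqxx addn1.
- rewrite eqxx -!natrM; congr _%:R; apply/eqP; rewrite eqn_leq; apply/andP; split; [exact h3 | exact h4].
- rewrite eqxx -!natrM; apply: nat_abs; [exact h1 | exact h2].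
Qed.

Lemma sum_eqa h (a : 'I_h) : (\sum_(b < h) ((b == a) : nat))%N = 1%N.
Proof. by rewrite (bigD1 a) //= eqxx big1 // => b /negbTE ->. Qed.

Lemma chain h p (R : seq {set 'I_p}) d : forall (m m' : 'I_h -> nat),
  (forall a, m' a <= m a)%N -> (\sum_a (m a - m' a))%N = d ->
  `|@prob_relorder h m p R - @prob_relorder h m' p R|
     <= d%:R * p%:R / ((\sum_a m' a).+1)%:R.
Proof.
elim: d => [|d IH] m m' Hle Hd.
  have Em : m = m'.
    apply: functional_extensionality => a.
    move/eqP: Hd; rewrite sum_nat_eq0 => /forallP/(_ a)/eqP.
    have := Hle a; lia.
  rewrite Em subrr normr0; apply: divr_ge0; [apply: mulr_ge0|]; apply: ler0n.
have : (\sum_a (m a - m' a) != 0)%N by rewrite Hd.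
rewrite sum_nat_eq0 negb_forall => /existsP [a] /= /eqP Ha.
pose m1 b := (m b - (b == a))%N.
have Em : m = (fun b => m1 b + (b == a))%N.
  apply: functional_extensionality => b; rewrite /m1.
  case: eqP => [->|_] /=; have := Hle a; lia.
have H1 b : (m' b <= m1 b)%N.
  rewrite /m1; case: eqP => [->|_] /=; have := Hle b; lia.
have H2 : (\sum_b (m1 b - m' b))%N = d.
  have : (\sum_b (m b - m' b) = \sum_b (m1 b - m' b) + \sum_b ((b == a) : nat))%N.
    rewrite -big_split /=; apply: eq_bigr => b _; rewrite /m1.
    case: eqP => [->|_] /=; have := Hle b; have := Hle a; lia.
  rewrite Hd sum_eqa; lia.
have IH' := IH m1 m' H1 H2.
have S := @step_rat h m1 a p R; rewrite -Em in S.
have Hsum : (\sum_b m' b <= \sum_b m1 b)%N by apply: leq_sum => b _.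
set B := ((\sum_a m' a).+1)%:R : rat.
have Bpos : 0 < B by rewrite ltr0n.
have Apos : 0 < ((\sum_b m1 b).+1)%:R :> rat by rewrite ltr0n.
have S2 : p%:R / ((\sum_b m1 b).+1)%:R <= p%:R / B.
  rewrite ler_pdivrMr // mulrAC ler_pdivlMr // ler_wpM2l ?ler0n //.
  by rewrite ler_nat ltnS.
apply: le_trans (ler_distD (@prob_relorder h m1 p R) _ _) _.
rewrite -!mulrA in IH' *.
set u := p%:R / B in S2 IH' *.
set w := d%:R * u in IH'.
have -> : d.+1%:R * u = w + u by rewrite /w -addn1 natrD mulrDl mul1r.
rewrite [w + u]addrC; apply: lerD; [exact: le_trans S S2 | exact: IH'].
Qed.

Theorem lemma2p9 :
  exists C : rat,
    forall (p : nat) (R : seq {set 'I_p}) (h : nat) (m m' : 'I_h -> nat),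
      (p <= 5)%N ->
      @ordered_partition p R ->
      (forall a, m' a <= m a)%N ->
      (\sum_(a < h) (m a - m' a) <= 5)%N ->
      (p <= \sum_(a < h) m' a)%N ->
      `|@prob_relorder h m p R - @prob_relorder h m' p R|
        <= C / (\sum_(a < h) m a)%:R.
Proof.
exists 125%:R => p R h m m' Hp _ Hle Hd _.
have := chain R Hle (erefl _).
set d := (\sum_a (m a - m' a))%N in Hd *.
set n' := (\sum_a m' a)%N.
have En : (\sum_a m a = n' + d)%N.
  rewrite /n' /d -big_split /=; apply: eq_bigr => a _; have := Hle a; lia.
rewrite En => H; apply: (le_trans H).
have [d0|dpos] := eqVneq (n' + d)%N 0%N.
  have d00 : d = 0%N by lia.
  by rewrite d0 d00 !mulr0n !mul0r invr0 mulr0.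
have P1 : 0 < (n'.+1)%:R :> rat by rewrite ltr0n.
have P2 : 0 < (n' + d)%:R :> rat by rewrite ltr0n lt0n.
rewrite (ler_pdivrMr _ _ P1) mulrAC (ler_pdivlMr _ _ P2).
rewrite -!natrM ler_nat.
have H1 : (d * p <= 5 * 5)%N by apply: leq_mul.
have H2 : (n' + d <= n' + 5)%N by rewrite leq_add2l.
apply: (@leq_trans (5 * 5 * (n' + 5))); first exact: leq_mul.
lia.
Qed.
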